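(* Suppose $N$ acts locally freely on $\mu^{-1}(0)$. Then condition (S) holds (i.e. at no point $p\in\mu^{-1}(0)$ is there a nonzero $(X_1,X_2,X_3)\in\mathfrak n^3$ with $(IX_1+SX_2+TX_3)_p=0$) if and only if, for every $(a,b)\in K$, the real-linear map $\Lambda_{(a,b)}\colon \mathfrak n_{L,J}\otimes(\mathbb R\times\mathbb C)\to\mathbb C^{L\setminus J}$, $(\theta^{(1)},\theta^{(c)})\mapsto (b_k\theta^{(1)}_k+a_k\theta^{(c)}_k)_{k\in L\setminus J}$, is injective, where $J=J(a,b)$, $L=L(a,b)$.
   Context: Setting: $\mathbb C^{d,d}=\mathbb C^d\times\mathbb C^d$ with coordinates $(z,w)$, $g=\mathrm{Re}\sum_k(dz_k\,d\bar z_k-dw_k\,d\bar w_k)$, $I(z,w)=(iz,-iw)$, $S(z,w)=(w,z)$, $T=IS$; $\mathbb T^d$ acts by $(z_k,w_k)\mapsto(e^{i\theta_k}z_k,e^{i\theta_k}w_k)$, and elements of $\mathfrak n\subset\mathbb R^d$ are identified with induced vector fields. Fix $u_1,\dots,u_d\in\mathbb Z^n$ spanning $\mathbb R^n$; $\beta\colon\mathbb R^d\to\mathbb R^n$, $e_k\mapsto u_k$; $\mathfrak n=\ker\beta$ with inclusion $\iota$; $N\subset\mathbb T^d$ the kernel of the induced map $\mathbb T^d\to\mathbb T^n$. Identify $\mathbb R^d$ with its dual via the standard inner product. Fix real $\lambda^{(j)}_k$, $\lambda^{(c)}_k=\lambda^{(2)}_k+i\lambda^{(3)}_k$; $\mu_I(z,w)=\sum_k(\tfrac12(|z_k|^2+|w_k|^2)+\lambda^{(1)}_k)\iota^*e_k$,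 $(\mu_S+i\mu_T)(z,w)=\sum_k(iz_k\bar w_k+\lambda^{(c)}_k)\iota^*e_k$. For $(a,b)\in\mathbb R^n\times\mathbb C^n$: $a_k=\langle a,u_k\rangle-\lambda^{(1)}_k$, $b_k=\langle b,u_k\rangle-\lambda^{(c)}_k$; $K=\{(a,b):a_k\geqslant|b_k|\ \forall k\}$; $V_k=\{a_k=0=b_k\}$, $W_k=\{a_k=|b_k|\}$; $J(a,b)=\{k:(a,b)\in V_k\}$, $L(a,b)=\{k:(a,b)\in W_k\}$ (so $J\subset L$). For $A\subset\{1,\dots,d\}$ let $\mathbb R_A=\mathrm{span}\{e_k:k\in A\}$ and $A'$ its complement. Let $\mathfrak n_L=\mathfrak n\cap\mathbb R_L$ and $\mathfrak n_{L,J}\subset\mathbb R_{L\setminus J}$ the image of $\mathfrak n_L$ under orthogonal projection to $\mathbb R_{J'}$. An element of $\mathfrak n_{L,J}\otimes(\mathbb R\times\mathbb C)$ is written $(\theta^{(1)},\theta^{(c)})$ with $\theta^{(1)}\in\mathfrak n_{L,J}$, $\theta^{(c)}=\theta^{(2)}+i\theta^{(3)}$, $\theta^{(2)},\theta^{(3)}\in\mathfrak n_{L,J}$, with components $\theta^{(\cdot)}_k$. *)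

(* Defs.v *)
From HB Require Import structures.
From mathcomp Require Import all_boot all_order all_algebra.
From mathcomp Require Import reals.
From mathcomp Require Export complex.
Set Implicit Arguments. Unset Strict Implicit. Unset Printing Implicit Defensive.
Import Order.TTheory GRing.Theory Num.Theory.
Local Open Scope ring_scope.
Local Open Scope complex_scope.

Section Toric.
Variables (R : realType) (d n : nat).
Local Notation C := R[i].

(* The integer vectors u_1..u_d in Z^n; u k j is the j-th coordinate of u_k. *)
Definition umat (u : 'I_d -> 'I_n -> int) : 'M[R]_(d, n) :=
  \matrix_(k, j) (u k j)%:~R.

(* X in n = ker beta, beta(e_k) = u_k, X : R^d *)
Definition in_nfrak (u : 'I_d -> 'I_n -> int) (X : 'I_d -> R) : Prop :=
  forall j : 'I_n, \sum_(k < d) X k * (u k j)%:~R = 0.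

(* points and tangent vectors of C^{d,d} = C^d x C^d, as pairs (z, w) *)
Definition pt := (('I_d -> C) * ('I_d -> C))%type.

Definition tadd (v w : pt) : pt :=
  (fun k => v.1 k + w.1 k, fun k => v.2 k + w.2 k).
Definition tzero : pt := (fun _ => 0, fun _ => 0).

Definition Iop (v : pt) : pt := (fun k => 'i * v.1 k, fun k => - ('i * v.2 k)).
Definition Sop (v : pt) : pt := (v.2, v.1).
Definition Top (v : pt) : pt := Iop (Sop v).

(* vector field on C^{d,d} induced by X in R^d = Lie(T^d), for the action
   (z_k, w_k) |-> (e^{i theta_k} z_k, e^{i theta_k} w_k) *)
Definition vf (X : 'I_d -> R) (p : pt) : pt :=
  (fun k => 'i * (X k)%:C * p.1 k, fun k => 'i * (X k)%:C * p.2 k).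

Definition lamc (lam2 lam3 : 'I_d -> R) (k : 'I_d) : C := (lam2 k +i* lam3 k).

(* p in mu^{-1}(0): mu_I(p) = 0 and (mu_S + i mu_T)(p) = 0 in n^*;
   iota^* e_k evaluated at X in n is X_k. *)
Definition in_mu0 (u : 'I_d -> 'I_n -> int) (lam1 lam2 lam3 : 'I_d -> R)
    (p : pt) : Prop :=
  (forall X, in_nfrak u X ->
     \sum_(k < d) ((2%:R)^-1 * (`|p.1 k| ^+ 2 + `|p.2 k| ^+ 2) + (lam1 k)%:C)
                  * (X k)%:C = 0) /\
  (forall X, in_nfrak u X ->
     \sum_(k < d) ('i * p.1 k * (p.2 k)^* + lamc lam2 lam3 k) * (X k)%:C = 0).

(* N acts locally freely on mu^{-1}(0): the infinitesimal action of n is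
   injective at every point of mu^{-1}(0) (all stabilisers are discrete). *)
Definition locally_free u lam1 lam2 lam3 : Prop :=
  forall p, in_mu0 u lam1 lam2 lam3 p ->
  forall X, in_nfrak u X -> vf X p = tzero -> X = (fun _ => 0).

Definition condS u lam1 lam2 lam3 : Prop :=
  forall p, in_mu0 u lam1 lam2 lam3 p ->
  forall X1 X2 X3, in_nfrak u X1 -> in_nfrak u X2 -> in_nfrak u X3 ->
  tadd (tadd (Iop (vf X1 p)) (Sop (vf X2 p))) (Top (vf X3 p)) = tzero ->
  [/\ X1 = (fun _ => 0), X2 = (fun _ => 0) & X3 = (fun _ => 0)].

Definition ak u (lam1 : 'I_d -> R) (a : 'I_n -> R) (k : 'I_d) : R :=
  \sum_(j < n) a j * (u k j)%:~R - lam1 k.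
Definition bk u (lam2 lam3 : 'I_d -> R) (b : 'I_n -> C) (k : 'I_d) : C :=
  \sum_(j < n) b j * ((u k j)%:~R)%:C - lamc lam2 lam3 k.

Definition inK u lam1 lam2 lam3 a b : Prop :=
  forall k, `|bk u lam2 lam3 b k| <= (ak u lam1 a k)%:C.

Definition Jset u lam1 lam2 lam3 a b (k : 'I_d) : bool :=
  (ak u lam1 a k == 0) && (bk u lam2 lam3 b k == 0).
Definition Lset u lam1 lam2 lam3 a b (k : 'I_d) : bool :=
  (ak u lam1 a k)%:C == `|bk u lam2 lam3 b k|.

(* n_{L,J}: image of n_L = n \cap R_L under orthogonal projection to R_{J'} *)
Definition in_nLJ u (Lp Jp : 'I_d -> bool) (th : 'I_d -> R) : Prop :=
  exists X, [/\ in_nfrak u X, (forall k, ~~ Lp k -> X k = 0) &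
            th = (fun k => if Jp k then 0 else X k)].

(* Lambda_{(a,b)} : n_{L,J} (x) (R x C) -> C^{L \ J}; elements of C^{L\J}
   are represented as functions 'I_d -> C vanishing outside L \ J. *)
Definition Lambda u lam1 lam2 lam3 a b
    (th : ('I_d -> R) * ('I_d -> R) * ('I_d -> R)) : 'I_d -> C :=
  fun k => if Lset u lam1 lam2 lam3 a b k && ~~ Jset u lam1 lam2 lam3 a b k
    then bk u lam2 lam3 b k * (th.1.1 k)%:C
         + (ak u lam1 a k)%:C * (th.1.2 k +i* th.2 k)
    else 0.

Definition Lambda_injective u lam1 lam2 lam3 a b : Prop :=
  let Lp := Lset u lam1 lam2 lam3 a b in
  let Jp := Jset u lam1 lam2 lam3 a b in
  forall x y : ('I_d -> R) * ('I_d -> R) * ('I_d -> R),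
    in_nLJ u Lp Jp x.1.1 -> in_nLJ u Lp Jp x.1.2 -> in_nLJ u Lp Jp x.2 ->
    in_nLJ u Lp Jp y.1.1 -> in_nLJ u Lp Jp y.1.2 -> in_nLJ u Lp Jp y.2 ->
    Lambda u lam1 lam2 lam3 a b x = Lambda u lam1 lam2 lam3 a b y -> x = y.

End Toric.

(* Main.v *)
Require Import Defs.
From HB Require Import structures.
From mathcomp Require Import all_boot all_order all_algebra.
From mathcomp Require Import reals complex.
From mathcomp Require Import ring lra.
From Stdlib Require Import FunctionalExtensionality.
Import Order.TTheory GRing.Theory Num.Theory.
Local Open Scope complex_scope.
Local Open Scope ring_scope.

Section Gen.
Context {C : numClosedFieldType}.
Implicit Types (z w th : C).

Definition E1x (c1 c2 c3 z w : C) : C :=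
  'i * ('i * c1 * z) + 'i * c2 * w + 'i * ('i * c3 * w).
Definition E2x (c1 c2 c3 z w : C) : C :=
  - ('i * ('i * c1 * w)) + 'i * c2 * z + - ('i * ('i * c3 * z)).

Lemma E1E (c1 c2 c3 z w : C) : E1x c1 c2 c3 z w = 'i * (c2 + 'i * c3) * w - c1 * z.
Proof.
rewrite /E1x; apply/eqP; rewrite -subr_eq0; apply/eqP.
transitivity (('i ^+ 2 + 1) * (c1 * z)); first by ring.
by rewrite sqrCi addNr mul0r.
Qed.

Lemma E2E (c1 c2 c3 z w : C) : c2^* = c2 -> c3^* = c3 ->
  E2x c1 c2 c3 z w = c1 * w + 'i * (c2 + 'i * c3)^* * z.
Proof.
move=> h2 h3; rewrite rmorphD rmorphM /= conjCi h2 h3 /E2x.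
apply/eqP; rewrite -subr_eq0; apply/eqP.
transitivity (- ('i ^+ 2 + 1) * (c1 * w)); first by ring.
by rewrite sqrCi addNr oppr0 mul0r.
Qed.

Lemma pwL (c1 th z w : C) : c1^* = c1 -> `|z| != `|w| ->
  'i * th * w - c1 * z = 0 -> c1 * w + 'i * th^* * z = 0 ->
  c1 = 0 /\ th = 0.
Proof.
move=> h1 hzw /eqP; rewrite subr_eq0 => /eqP e1 /eqP; rewrite addr_eq0 => /eqP e2.
have e3 : c1 * w^* = 'i * th * z^*.
  rewrite -h1 -rmorphM e2 rmorphN !rmorphM /= conjCi conjCK. by ring.
have e4 : 'i * th * (w * w^* - z * z^*) = 0.
  transitivity ((c1 * z) * w^* - z * ('i * th * z^*)); first by rewrite -e1; ring.
  by rewrite -e3; ring.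
have hP : w * w^* - z * z^* != 0.
  rewrite -!normCK subr_eq0 eqrXn2 // eq_sym //.
have hth : th = 0.
  by move/eqP: e4; rewrite !mulf_eq0 (negbTE hP) (negbTE (neq0Ci _)) orbF => /eqP.
split=> //.
move: e1 e2; rewrite hth rmorph0 !(mulr0, mul0r, oppr0) => /esym/eqP e1 /eqP e2.
move: e1 e2; rewrite !mulf_eq0 => /orP[/eqP //|/eqP z0] /orP[/eqP //|/eqP w0].
by move: hzw; rewrite z0 w0 eqxx.
Qed.

Lemma pwLJ (c1 th z w : C) : c1^* = c1 -> `|z| = `|w| -> z != 0 ->
  ('i * th * w - c1 * z = 0 /\ c1 * w + 'i * th^* * z = 0) <->
  ('i * z * w^* * c1 + `|z| ^+ 2 * th = 0).
Proof.
move=> h1 hzw z0.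
have hP : `|z| ^+ 2 = w * w^* by rewrite hzw normCK.
have hP' : `|z| ^+ 2 = z * z^* by rewrite normCK.
have Pn0 : `|z| ^+ 2 != 0 by rewrite expf_eq0 normr_eq0 (negbTE z0) andbF.
split.
  case=> e1 _; rewrite hP.
  transitivity (- ('i * w^* * ('i * th * w - c1 * z)) + ('i ^+ 2 + 1) * (th * w * w^*)).
    by ring.
  by rewrite e1 sqrCi addNr !(mul0r, mulr0, oppr0, add0r, addr0).
move=> h.
have hc : `|z| ^+ 2 * th^* - 'i * z^* * w * c1 = 0.
  have := congr1 Num.conj h; rewrite rmorph0 rmorphD !rmorphM /= conjCK conjCi.
  rewrite h1 (conj_Creal (normr_real z)) => <-; ring.
split; apply: (mulfI Pn0); rewrite mulr0.
  transitivity ('i * w * ('i * z * w^* * c1 + `|z| ^+ 2 * th) - ('i ^+ 2 + 1) * (c1 * z * (w * w^*))).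
    by rewrite hP; ring.
  by rewrite h sqrCi addNr !mulr0 mul0r subr0.
transitivity ('i * z * (`|z| ^+ 2 * th^* - 'i * z^* * w * c1) + ('i ^+ 2 + 1) * (c1 * w * (z * z^*))).
  by rewrite hP'; ring.
by rewrite hc sqrCi addNr !mulr0 mul0r addr0.
Qed.


Lemma normB (z w : C) : `|'i * z * w^*| = `|z| * `|w|.
Proof. by rewrite !normrM normCi mul1r norm_conjC. Qed.

Lemma AeqB (z w : C) :
  (2^-1 * (`|z| ^+ 2 + `|w| ^+ 2) == `|'i * z * w^*|) = (`|z| == `|w|).
Proof.
rewrite normB -subr_eq0.
have -> : 2^-1 * (`|z| ^+ 2 + `|w| ^+ 2) - `|z| * `|w| = 2^-1 * (`|z| - `|w|) ^+ 2.
  by field.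
by rewrite mulf_eq0 invr_eq0 pnatr_eq0 /= expf_eq0 /= subr_eq0.
Qed.

Lemma A0 (z w : C) :
  (2^-1 * (`|z| ^+ 2 + `|w| ^+ 2) == 0) = (z == 0) && (w == 0).
Proof.
rewrite mulf_eq0 invr_eq0 pnatr_eq0 /= paddr_eq0 ?exprn_ge0 ?normr_ge0 //.
by rewrite !expf_eq0 /= !normr_eq0.
Qed.

Lemma ABle (z w : C) : `|'i * z * w^*| <= 2^-1 * (`|z| ^+ 2 + `|w| ^+ 2).
Proof.
rewrite normB -subr_ge0.
have -> : 2^-1 * (`|z| ^+ 2 + `|w| ^+ 2) - `|z| * `|w| = 2^-1 * (`|z| - `|w|) ^+ 2.
  by field.
by rewrite mulr_ge0 ?invr_ge0 ?ler0n ?real_exprn_even_ge0 // realB // normr_real.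
Qed.

Lemma mkpt (A be : C) : `|be| <= A ->
  exists zw : C * C, A = 2^-1 * (`|zw.1| ^+ 2 + `|zw.2| ^+ 2) /\ be = 'i * zw.1 * zw.2^*.
Proof.
move=> hle.
have A0 : 0 <= A := le_trans (normr_ge0 _) hle.
set D := sqrtC (A ^+ 2 - `|be| ^+ 2).
have D0 : 0 <= D.
  by rewrite sqrtC_ge0 subr_ge0 ler_pXn2r // nnegrE.
have hD : D ^+ 2 = A ^+ 2 - `|be| ^+ 2 by rewrite sqrtCK.
set r := sqrtC (A + D).
have r0 : 0 <= r by rewrite sqrtC_ge0 addr_ge0.
have hr : r ^+ 2 = A + D by rewrite sqrtCK.
have rJ : r^* = r by rewrite conj_Creal // ger0_real.
exists (- 'i * be / r, r) => /=.
have hb2 : `|be| ^+ 2 = A ^+ 2 - D ^+ 2 by rewrite hD opprB addrC subrK.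
have [rz|rnz] := eqVneq r 0.
  have /eqP : A + D = 0 by rewrite -hr rz expr0n.
  rewrite paddr_eq0 // => /andP[/eqP Az /eqP Dz].
  have bz : be = 0.
    by apply/eqP; rewrite -normr_eq0 -sqrf_eq0 hb2 Az Dz expr0n subr0.
  by rewrite rz bz Az !(mulr0, mul0r, normr0, expr0n, addr0).
have ADnz : A + D != 0 by rewrite -hr expf_eq0 rnz.
split.
  rewrite !normrM normrN normCi mul1r normfV (ger0_norm r0) expr_div_n hr hb2.
  by field.
rewrite rJ.
transitivity (- ('i ^+ 2) * be); first by rewrite sqrCi opprK mul1r.
by field.
Qed.


Lemma diffL (B A c1 c2 c3 d1 d2 d3 : C) :
  B * c1 + A * (c2 + 'i * c3) = B * d1 + A * (d2 + 'i * d3) ->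
  B * (c1 - d1) + A * ((c2 - d2) + 'i * (c3 - d3)) = 0.
Proof.
move=> h.
transitivity ((B * c1 + A * (c2 + 'i * c3)) - (B * d1 + A * (d2 + 'i * d3))); first by ring.
by rewrite h subrr.
Qed.

End Gen.
Arguments mkpt {C A be}.
Arguments pwLJ {C c1 th z w}.
Arguments pwL {C c1 th z w}.
Arguments diffL {C B A c1 c2 c3 d1 d2 d3}.

Section Conc.
Variables (R : realType) (d n : nat) (u : 'I_d -> 'I_n -> int).

Lemma orth (v : 'I_d -> R) :
  (forall X, in_nfrak u X -> \sum_(k < d) v k * X k = 0) ->
  exists a : 'I_n -> R, forall k, v k = \sum_(j < n) a j * (u k j)%:~R.
Proof.
move=> hv.
pose U := umat R u.
pose V : 'rV[R]_d := \row_k v k.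
have : (V <= U^T)%MS.
  rewrite submxE; apply/eqP/matrixP => i j; rewrite !mxE.
  have hX : in_nfrak u (fun k => cokermx U^T k j).
    move=> j'; transitivity ((U^T *m cokermx U^T) j' j); last by rewrite mulmx_coker mxE.
    by rewrite mxE; apply: eq_bigr => k _; rewrite !mxE mulrC.
  transitivity (\sum_(k < d) v k * cokermx U^T k j); last by rewrite hv.
  by apply: eq_bigr => k _; rewrite mxE.
case/submxP => D hD.
exists (fun j => D 0 j) => k.
have := congr1 (fun M : 'rV[R]_d => M 0 k) hD; rewrite !mxE => ->.
by apply: eq_bigr => j _; rewrite !mxE.
Qed.

Local Notation C := R[i].

Lemma cplxE (x y : R) : (x +i* y) = x%:C + 'i * y%:C :> C.
Proof. rewrite [RHS]complexE /=. simpc. by []. Qed.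

Lemma mu0_of (a : 'I_n -> R) (b : 'I_n -> C) (lam1 lam2 lam3 : 'I_d -> R) (p : pt R d) :
  (forall k, (ak u lam1 a k)%:C = 2^-1 * (`|p.1 k| ^+ 2 + `|p.2 k| ^+ 2) /\
             bk u lam2 lam3 b k = 'i * p.1 k * (p.2 k)^*) ->
  in_mu0 u lam1 lam2 lam3 p.
Proof.
move=> hp; split => X hX.
  transitivity (\sum_(k < d) ((\sum_(j < n) a j * (u k j)%:~R) * X k)%:C).
    apply: eq_bigr => k _; rewrite -(proj1 (hp k)) -rmorphD /ak subrK -rmorphM.
    done.
  rewrite -rmorph_sum.
  have -> : \sum_(k < d) (\sum_(j < n) a j * (u k j)%:~R) * X k = 0.
    under eq_bigr do rewrite mulr_suml.
    rewrite exchange_big /=; apply: big1 => j _.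
    transitivity (a j * \sum_(k < d) X k * (u k j)%:~R).
      by rewrite mulr_sumr; apply: eq_bigr => k _; rewrite mulrAC mulrA.
    by rewrite hX mulr0.
  by rewrite rmorph0.
transitivity (\sum_(k < d) (\sum_(j < n) b j * ((u k j)%:~R)%:C) * (X k)%:C).
  by apply: eq_bigr => k _; rewrite -(proj2 (hp k)) /bk subrK.
under eq_bigr do rewrite mulr_suml.
rewrite exchange_big /=; apply: big1 => j _.
transitivity (b j * (\sum_(k < d) X k * (u k j)%:~R)%:C).
  rewrite rmorph_sum mulr_sumr; apply: eq_bigr => k _; rewrite rmorphM /=.
  by rewrite -mulrA; congr (_ * _); apply: mulrC.
by rewrite hX rmorph0 mulr0.
Qed.

Lemma realC (x : R) : (x%:C : C) \is Num.real.
Proof. by apply/complex_realP; exists x. Qed.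

Lemma mu_ab (lam1 lam2 lam3 : 'I_d -> R) (p : pt R d) :
  in_mu0 u lam1 lam2 lam3 p ->
  exists a : 'I_n -> R, exists b : 'I_n -> C,
  (forall k, (ak u lam1 a k)%:C = 2^-1 * (`|p.1 k| ^+ 2 + `|p.2 k| ^+ 2) /\
             bk u lam2 lam3 b k = 'i * p.1 k * (p.2 k)^*).
Proof.
case=> h1 h2.
pose x k : C := 2^-1 * (`|p.1 k| ^+ 2 + `|p.2 k| ^+ 2) + (lam1 k)%:C.
have xr k : (@complex.Re R (x k))%:C = x k.
  apply: RRe_real; rewrite /x rpredD ?realC // rpredM ?rpredV ?realn //.
  by rewrite rpredD // rpredX // normr_real.
have [a ha] : exists a : 'I_n -> R, forall k, @complex.Re R (x k) = \sum_(j < n) a j * (u k j)%:~R.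
  apply: orth => X hX; apply: (@complexI R); rewrite rmorph0 rmorph_sum.
  transitivity (\sum_(k < d) x k * (X k)%:C); last exact: h1.
  by apply: eq_bigr => k _; rewrite rmorphM /= xr.
pose y k : C := 'i * p.1 k * (p.2 k)^* + lamc lam2 lam3 k.
have yE k : y k = (@complex.Re R (y k))%:C + 'i * (@complex.Im R (y k))%:C by rewrite -cplxE; case: (y k).
have hs X : in_nfrak u X ->
   \sum_(k < d) @complex.Re R (y k) * X k = 0 /\ \sum_(k < d) @complex.Im R (y k) * X k = 0.
  move=> hX; have := h2 X hX.
  have -> : \sum_(k < d) ('i * p.1 k * (p.2 k)^* + lamc lam2 lam3 k) * (X k)%:C =
            (\sum_(k < d) @complex.Re R (y k) * X k) +i* (\sum_(k < d) @complex.Im R (y k) * X k).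
    rewrite cplxE !rmorph_sum mulr_sumr -big_split /=; apply: eq_bigr => k _.
    change (y k * (X k)%:C = (complex.Re (y k) * X k)%:C + 'i * (complex.Im (y k) * X k)%:C); rewrite {1}[y k]yE !rmorphM /= mulrDl mulrA. done.
  by case.
have [br hbr] : exists a : 'I_n -> R, forall k, @complex.Re R (y k) = \sum_(j < n) a j * (u k j)%:~R.
  by apply: orth => X /hs [].
have [bi hbi] : exists a : 'I_n -> R, forall k, @complex.Im R (y k) = \sum_(j < n) a j * (u k j)%:~R.
  by apply: orth => X /hs [].
exists a, (fun j => br j +i* bi j) => k; split.
  by rewrite /ak rmorphB /= -ha xr /x addrK.
rewrite /bk.
have -> : \sum_(j < n) (br j +i* bi j) * ((u k j)%:~R)%:C = y k.
  rewrite [RHS]yE hbr hbi !rmorph_sum mulr_sumr -big_split /=; apply: eq_bigr => j _.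
  by rewrite cplxE mulrDl !rmorphM mulrA.
by rewrite /y addrK.
Qed.

Lemma JsetE (lam1 lam2 lam3 : 'I_d -> R) a b k (z w : C) :
  (ak u lam1 a k)%:C = 2^-1 * (`|z| ^+ 2 + `|w| ^+ 2) ->
  bk u lam2 lam3 b k = 'i * z * w^* ->
  Jset u lam1 lam2 lam3 a b k = (z == 0) && (w == 0).
Proof.
move=> hA hB; rewrite /Jset -[ak u lam1 a k == 0](inj_eq (@complexI R)) rmorph0 hA A0 hB.
by case: eqP => [->|] //=; rewrite !mulr0 mul0r eqxx andbT.
Qed.

Lemma LsetE (lam1 lam2 lam3 : 'I_d -> R) a b k (z w : C) :
  (ak u lam1 a k)%:C = 2^-1 * (`|z| ^+ 2 + `|w| ^+ 2) ->
  bk u lam2 lam3 b k = 'i * z * w^* ->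
  Lset u lam1 lam2 lam3 a b k = (`|z| == `|w|).
Proof. by move=> hA hB; rewrite /Lset hA hB AeqB. Qed.

Lemma comboE (X1 X2 X3 : 'I_d -> R) (p : pt R d) :
  tadd (tadd (Iop (vf X1 p)) (Sop (vf X2 p))) (Top (vf X3 p)) = tzero R d <->
  (forall k, E1x (X1 k)%:C (X2 k)%:C (X3 k)%:C (p.1 k) (p.2 k) = 0 /\
             E2x (X1 k)%:C (X2 k)%:C (X3 k)%:C (p.1 k) (p.2 k) = 0).
Proof.
split.
  move=> h k; split.
    exact: (congr1 (fun q : pt R d => q.1 k) h).
  exact: (congr1 (fun q : pt R d => q.2 k) h).
move=> h; rewrite /tadd /tzero; congr pair; apply: functional_extensionality => k.
  exact: (h k).1.
exact: (h k).2.
Qed.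

End Conc.
Arguments JsetE {R d n u lam1 lam2 lam3 a b k z w}.
Arguments LsetE {R d n u lam1 lam2 lam3 a b k z w}.
Arguments mu_ab {R d n u lam1 lam2 lam3 p}.

Theorem proposition5p9 (R : realType) (d n : nat)
  (u : 'I_d -> 'I_n -> int) (lam1 lam2 lam3 : 'I_d -> R) :
  row_full (umat R u) ->
  locally_free u lam1 lam2 lam3 ->
  (condS u lam1 lam2 lam3 <->
   forall (a : 'I_n -> R) (b : 'I_n -> R[i]),
     inK u lam1 lam2 lam3 a b -> Lambda_injective u lam1 lam2 lam3 a b).
Proof.
move=> _ hfree.
have hn : forall X Y : 'I_d -> R, in_nfrak u X -> in_nfrak u Y ->
    in_nfrak u (fun k => X k - Y k).
  move=> X Y hX hY j; rewrite /in_nfrak.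
  under eq_bigr do rewrite mulrBl.
  by rewrite sumrB hX hY subrr.
split.
  move=> hS a b hK.
  have [zw hzw] := fin_all_exists (fun k => mkpt (hK k)).
  pose p : pt R d := (fun k => (zw k).1, fun k => (zw k).2).
  have hA k : (ak u lam1 a k)%:C = 2^-1 * (`|p.1 k| ^+ 2 + `|p.2 k| ^+ 2) := (hzw k).1.
  have hB k : bk u lam2 lam3 b k = 'i * p.1 k * (p.2 k)^* := (hzw k).2.
  have hmu : in_mu0 u lam1 lam2 lam3 p by apply: mu0_of => k; split.
  rewrite /Lambda_injective.
  move=> [[x11 x12] x2] [[y11 y12] y2] /=.
  move=> [X1 [hX1 hL1 ->]] [X2 [hX2 hL2 ->]] [X3 [hX3 hL3 ->]].
  move=> [Y1 [hY1 hM1 ->]] [Y2 [hY2 hM2 ->]] [Y3 [hY3 hM3 ->]] hLam.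
  have := hS p hmu (fun k => X1 k - Y1 k) (fun k => X2 k - Y2 k) (fun k => X3 k - Y3 k)
    (hn _ _ hX1 hY1) (hn _ _ hX2 hY2) (hn _ _ hX3 hY3).
  case.
    apply/comboE => k.
    have hLk := congr1 (fun f => f k) hLam; rewrite /Lambda /= in hLk.
    have eJ := JsetE (hA k) (hB k); have eL := LsetE (hA k) (hB k).
    case: (boolP (Jset u lam1 lam2 lam3 a b k)) => hJ.
      move: hJ; rewrite eJ => /andP[/eqP z0 /eqP w0]; rewrite z0 w0 /E1x /E2x.
      by rewrite !mulr0 !oppr0 !addr0.
    case: (boolP (Lset u lam1 lam2 lam3 a b k)) => hLs; last first.
      rewrite (hL1 k hLs) (hL2 k hLs) (hL3 k hLs) (hM1 k hLs) (hM2 k hLs) (hM3 k hLs).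
      by rewrite subrr rmorph0 /E1x /E2x !(mulr0, mul0r, oppr0, addr0).
    rewrite hLs (negbTE hJ) /= !cplxE in hLk.
    have := diffL hLk; rewrite -!rmorphB /= => hLk'.
    have hzw' : `|p.1 k| = `|p.2 k| by apply/eqP; rewrite -eL.
    have z0 : p.1 k != 0.
      apply: contraNneq hJ => z0; rewrite eJ z0 eqxx /= -normr_eq0 -hzw' z0 normr0.
      done.
    have hA' : (ak u lam1 a k)%:C = `|p.1 k| ^+ 2.
      by rewrite hA -hzw'; field.
    rewrite hA' hB in hLk'.
    have [h1 h2] := (pwLJ (conj_Creal (realC _ _)) hzw' z0).2 hLk'.
    by split; [rewrite E1E; exact: h1 | rewrite (E2E _ _ _ _ _ (conj_Creal (realC _ _)) (conj_Creal (realC _ _))); exact: h2].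
  move=> e1 e2 e3.
  have f (X Y : 'I_d -> R) : (fun k => X k - Y k) = (fun _ => 0) -> forall k, X k = Y k.
    by move=> e k; have /eqP := congr1 (fun f => f k) e; rewrite subr_eq0 => /eqP.
  by congr (_, _, _); apply: functional_extensionality => k; first [rewrite (f _ _ e1) | rewrite (f _ _ e2) | rewrite (f _ _ e3)].
move=> hI p hp X1 X2 X3 hX1 hX2 hX3 /comboE hc.
have [a [b hab]] := mu_ab hp.
have hA k := (hab k).1; have hB k := (hab k).2.
have hK : inK u lam1 lam2 lam3 a b.
  by move=> k; rewrite hA hB; exact: ABle.
have hI' := hI a b hK; rewrite /Lambda_injective in hI'.
have eJ k := JsetE (hA k) (hB k); have eL k := LsetE (hA k) (hB k).
have cr (x : R) : (x%:C : R[i])^* = x%:C := conj_Creal (realC _ _).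
have hoff k : ~~ Lset u lam1 lam2 lam3 a b k -> [/\ X1 k = 0, X2 k = 0 & X3 k = 0].
  move=> hLs; have [e1 e2] := hc k.
  rewrite E1E in e1; rewrite (E2E _ _ _ _ _ (cr _) (cr _)) in e2.
  have hne : `|p.1 k| != `|p.2 k| by rewrite -eL.
  have [c0 t0] := pwL (cr _) hne e1 e2.
  have x1 : X1 k = 0 by apply: (@complexI R); rewrite c0 rmorph0.
  rewrite -cplxE in t0.
  have := congr1 (@complex.Re R) t0; have := congr1 (@complex.Im R) t0 => /= x3 x2.
  by split.
have nLJ (X : 'I_d -> R) : in_nfrak u X -> (forall k, ~~ Lset u lam1 lam2 lam3 a b k -> X k = 0) ->
    in_nLJ u (Lset u lam1 lam2 lam3 a b) (Jset u lam1 lam2 lam3 a b)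
      (fun k => if Jset u lam1 lam2 lam3 a b k then 0 else X k).
  by move=> hX hL; exists X; split.
have n0 : in_nfrak u (fun _ : 'I_d => (0:R)) by move=> j; apply: big1 => k _; rewrite mul0r.
have nLJ0 : in_nLJ u (Lset u lam1 lam2 lam3 a b) (Jset u lam1 lam2 lam3 a b) (fun _ : 'I_d => (0:R)).
  exists (fun _ : 'I_d => (0:R)); split => //; apply: functional_extensionality => k; by case: ifP.
pose mask (X : 'I_d -> R) := fun k : 'I_d => if Jset u lam1 lam2 lam3 a b k then 0 else X k.
have hLam : Lambda u lam1 lam2 lam3 a b (mask X1, mask X2, mask X3) =
            Lambda u lam1 lam2 lam3 a b ((fun _ : 'I_d => (0:R)), (fun _ : 'I_d => (0:R)), (fun _ : 'I_d => (0:R))).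
  apply: functional_extensionality => k; rewrite /Lambda /mask /=.
  case: ifP => // /andP[hLs hJ].
  rewrite (negbTE hJ) !cplxE !rmorph0 !mulr0 addr0 mulr0.
  have [e1 e2] := hc k; rewrite E1E in e1; rewrite (E2E _ _ _ _ _ (cr _) (cr _)) in e2.
  have hzw' : `|p.1 k| = `|p.2 k| by apply/eqP; rewrite -eL.
  have z0 : p.1 k != 0.
    apply: contraNneq hJ => z0; rewrite eJ z0 eqxx /= -normr_eq0 -hzw' z0 normr0.
    done.
  have hA' : (ak u lam1 a k)%:C = `|p.1 k| ^+ 2.
    by rewrite hA -hzw'; field.
  rewrite hA' hB.
  by rewrite addr0; exact: (pwLJ (cr _) hzw' z0).1 (conj e1 e2).
have o1 k (h : ~~ Lset u lam1 lam2 lam3 a b k) : X1 k = 0 by case: (hoff k h).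
have o2 k (h : ~~ Lset u lam1 lam2 lam3 a b k) : X2 k = 0 by case: (hoff k h).
have o3 k (h : ~~ Lset u lam1 lam2 lam3 a b k) : X3 k = 0 by case: (hoff k h).
have := hI' (mask X1, mask X2, mask X3) ((fun _ : 'I_d => (0:R)), (fun _ : 'I_d => (0:R)), (fun _ : 'I_d => (0:R)))
  (nLJ _ hX1 o1) (nLJ _ hX2 o2) (nLJ _ hX3 o3) nLJ0 nLJ0 nLJ0 hLam.
case => m1 m2 m3.
have hz X : in_nfrak u X -> mask X = (fun _ : 'I_d => (0:R)) -> X = (fun _ : 'I_d => (0:R)).
  move=> hX m; apply: (hfree p hp X hX).
  rewrite /vf /tzero; congr pair; apply: functional_extensionality => k;
  have := congr1 (fun f => f k) m; rewrite /mask; case: (boolP (Jset u lam1 lam2 lam3 a b k)) => hJ /=.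
  - by move: hJ; rewrite eJ => /andP[/eqP z0 /eqP w0] _; rewrite ?z0 ?w0 mulr0.
  - by move=> ->; rewrite rmorph0 mulr0 mul0r.
  - by move: hJ; rewrite eJ => /andP[/eqP z0 /eqP w0] _; rewrite ?z0 ?w0 mulr0.
  - by move=> ->; rewrite rmorph0 mulr0 mul0r.
by split; apply: hz.
Qed.
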